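(* Let $H=\mathrm{sh}_0(G_{\mathtt{ALD}})$ and let $M$ be the set of cosets $gH$, $g\in G_{\mathtt{ALD}}$. Then the operations $(gH)*(hH):=(g*h)H$ and $(gH)\circ(hH):=(g\circ h)H$ are well defined on $M$, and $(M,*,\circ)$ is an $\mathtt{ALD}$-algebra, i.e. it satisfies $a*(b*c)=(a*b)*(a*c)$, $a*(b\circ c)=(a*b)\circ(a*c)$ and $a*(b*c)=(a\circ b)*c$ for all $a,b,c\in M$.
   Context: Addresses are finite sequences over $\{0,1\}$, $\varepsilon$ empty, concatenation by juxtaposition; incomparable means neither is a prefix of the other. $G_{\mathtt{ALD}}$ is the group generated by $S_\alpha,A_\alpha$ ($\alpha\in\{0,1\}^*$) subject to the relations, with $X,Y\in\{S,A\}$ and arbitrary addresses $\alpha,\beta,\delta$ ($\delta$ possibly empty): $X_\alpha Y_\beta=Y_\beta X_\alpha$ for $\alpha,\beta$ incomparable; $X_{\alpha0\delta}S_\alpha=S_\alpha X_{\alpha00\delta}X_{\alpha10\delta}$; $X_{\alpha10\delta}S_\alpha=S_\alpha X_{\alpha01\delta}$; $X_{\alpha11\delta}S_\alpha=S_\alpha X_{\alpha11\delta}$; $X_{\alpha0\delta}A_\alpha=A_\alpha X_{\alpha00\delta}$; $X_{\alpha10\delta}A_\alpha=A_\alpha X_{\alpha01\delta}$; $X_{\alpha11\delta}A_\alpha=A_\alpha X_{\alpha1\delta}$; $S_\alpha S_{\alpha1}S_\alpha=S_{\alpha1}S_\alpha S_{\alpha1}S_{\alpha0}$; $S_\alpha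 S_{\alpha1}A_\alpha=A_{\alpha1}S_\alpha S_{\alpha0}$; $A_\alpha S_\alpha=S_{\alpha1}S_\alpha A_{\alpha1}A_{\alpha0}$. $\mathrm{sh}_\beta$ is the endomorphism with $S_\alpha\mapsto S_{\beta\alpha}$, $A_\alpha\mapsto A_{\beta\alpha}$. On $G_{\mathtt{ALD}}$: $g*h:=g\,\mathrm{sh}_1(h)\,S_\varepsilon\,\mathrm{sh}_1(g)^{-1}$ and $g\circ h:=g\,\mathrm{sh}_1(h)\,A_\varepsilon$. *)

(* Defs.v *)
(* The group G_ALD is given by a presentation;
   we realise it as words in the generators and their inverses modulo the
   congruence generated by free cancellation and the defining relations. *)
From mathcomp Require Import all_boot.
Set Implicit Arguments. Unset Strict Implicit. Unset Printing Implicit Defensive.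

(* addresses: finite sequences over {0,1}, 0 = false, 1 = true *)
Definition addr := seq bool.

Inductive kind := KS | KA.

Record gen := Gen { gkind : kind; gaddr : addr }.

(* a letter: a generator (false) or its inverse (true) *)
Definition letter := (gen * bool)%type.
Definition word := seq letter.

Definition lt (k : kind) (a : addr) : letter := (Gen k a, false).
Definition S_ (a : addr) : word := [:: lt KS a].
Definition A_ (a : addr) : word := [:: lt KA a].
Definition X_ (k : kind) (a : addr) : word := [:: lt k a].

Definition winv (w : word) : word := rev (map (fun l => (l.1, ~~ l.2)) w).

Definition sh (b : addr) (w : word) : word :=
  map (fun l => (Gen (gkind l.1) (b ++ gaddr l.1), l.2)) w.

Definition incomparable (a b : addr) : bool := ~~ prefix a b && ~~ prefix b a.

Inductive ald_rel : word -> word -> Prop :=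
| rel_cancel1 (l : letter) : ald_rel [:: l; (l.1, ~~ l.2)] [::]
| rel_comm X Y (a b : addr) : incomparable a b ->
    ald_rel (X_ X a ++ X_ Y b) (X_ Y b ++ X_ X a)
| rel_S0 X (a d : addr) :
    ald_rel (X_ X (a ++ false :: d) ++ S_ a)
            (S_ a ++ X_ X (a ++ false :: false :: d) ++ X_ X (a ++ true :: false :: d))
| rel_S10 X (a d : addr) :
    ald_rel (X_ X (a ++ true :: false :: d) ++ S_ a)
            (S_ a ++ X_ X (a ++ false :: true :: d))
| rel_S11 X (a d : addr) :
    ald_rel (X_ X (a ++ true :: true :: d) ++ S_ a)
            (S_ a ++ X_ X (a ++ true :: true :: d))
| rel_A0 X (a d : addr) :
    ald_rel (X_ X (a ++ false :: d) ++ A_ a)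
            (A_ a ++ X_ X (a ++ false :: false :: d))
| rel_A10 X (a d : addr) :
    ald_rel (X_ X (a ++ true :: false :: d) ++ A_ a)
            (A_ a ++ X_ X (a ++ false :: true :: d))
| rel_A11 X (a d : addr) :
    ald_rel (X_ X (a ++ true :: true :: d) ++ A_ a)
            (A_ a ++ X_ X (a ++ true :: d))
| rel_SSS (a : addr) :
    ald_rel (S_ a ++ S_ (a ++ [:: true]) ++ S_ a)
            (S_ (a ++ [:: true]) ++ S_ a ++ S_ (a ++ [:: true]) ++ S_ (a ++ [:: false]))
| rel_SSA (a : addr) :
    ald_rel (S_ a ++ S_ (a ++ [:: true]) ++ A_ a)
            (A_ (a ++ [:: true]) ++ S_ a ++ S_ (a ++ [:: false]))
| rel_AS (a : addr) :
    ald_rel (A_ a ++ S_ a)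
            (S_ (a ++ [:: true]) ++ S_ a ++ A_ (a ++ [:: true]) ++ A_ (a ++ [:: false])).

Inductive ald_step : word -> word -> Prop :=
| step_at (u v l r : word) : ald_rel l r -> ald_step (u ++ l ++ v) (u ++ r ++ v).

Inductive ald_eq : word -> word -> Prop :=
| ald_refl w : ald_eq w w
| ald_stepE w1 w2 : ald_step w1 w2 -> ald_eq w1 w2
| ald_sym w1 w2 : ald_eq w1 w2 -> ald_eq w2 w1
| ald_trans w1 w2 w3 : ald_eq w1 w2 -> ald_eq w2 w3 -> ald_eq w1 w3.

Definition ald_star (g h : word) : word :=
  g ++ sh [:: true] h ++ S_ [::] ++ winv (sh [:: true] g).
Definition ald_circ (g h : word) : word :=
  g ++ sh [:: true] h ++ A_ [::].

Definition inH (w : word) : Prop := exists u : word, ald_eq w (sh [:: false] u).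

Definition same_coset (g g' : word) : Prop := inH (winv g ++ g').

(* Main.v *)
Require Import Defs.
From mathcomp Require Import all_boot.
From Stdlib Require Import Setoid Morphisms.
Set Implicit Arguments. Unset Strict Implicit. Unset Printing Implicit Defensive.

Add Parametric Relation : word ald_eq
  reflexivity proved by ald_refl
  symmetry proved by ald_sym
  transitivity proved by ald_trans as ald_setoid.

Infix "=G" := ald_eq (at level 70).
#[local] Hint Resolve ald_refl : core.

Lemma step_cat p q a b : ald_step a b -> ald_step (p ++ a ++ q) (p ++ b ++ q).
Proof.
case=> u v l r H.
have := step_at (p ++ u) (v ++ q) H.
by rewrite -!catA.
Qed.

Lemma eq_catl p q a b : a =G b -> p ++ a ++ q =G p ++ b ++ q.
Proof.
elim=> [w|w1 w2 H|w1 w2 _ IH|w1 w2 w3 _ IH1 _ IH2].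
- reflexivity.
- by apply: ald_stepE; apply: step_cat.
- by symmetry.
- by transitivity (p ++ w2 ++ q).
Qed.

Add Parametric Morphism : (@cat letter) with signature
  ald_eq ==> ald_eq ==> ald_eq as cat_mor.
Proof.
move=> x y H x' y' H'.
transitivity (y ++ x').
- have := eq_catl [::] x' H. by [].
- have := eq_catl y [::] H'. by rewrite !cats0.
Qed.

Lemma rel_eq l r : ald_rel l r -> l =G r.
Proof. move=> H; apply: ald_stepE; have := step_at [::] [::] H; by rewrite /= !cats0. Qed.

Lemma winv_cat u v : winv (u ++ v) = winv v ++ winv u.
Proof. by rewrite /winv map_cat rev_cat. Qed.
Lemma winvK w : winv (winv w) = w.
Proof. rewrite /winv map_rev revK -map_comp; elim: w => //= [[g b] w] ->; by rewrite negbK. Qed.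
Lemma sh_cat p u v : sh p (u ++ v) = sh p u ++ sh p v.
Proof. by rewrite /sh map_cat. Qed.
Lemma sh_sh p q w : sh p (sh q w) = sh (p ++ q) w.
Proof. rewrite /sh -map_comp; apply: eq_map => -[[k a] b] /=; by rewrite catA. Qed.
Lemma winv_sh p w : winv (sh p w) = sh p (winv w).
Proof. by rewrite /winv /sh map_rev -!map_comp. Qed.

Lemma catV w : w ++ winv w =G [::].
Proof.
elim: w => [|l w IH]; first reflexivity.
have -> : winv (l :: w) = winv w ++ [:: (l.1, ~~ l.2)].
  by rewrite /winv map_cons rev_cons -cats1.
transitivity ([:: l] ++ (w ++ winv w) ++ [:: (l.1, ~~ l.2)]).
  by rewrite -catA; reflexivity.
rewrite IH /=; apply: rel_eq; exact: rel_cancel1.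
Qed.
Lemma Vcat w : winv w ++ w =G [::].
Proof. rewrite -{2}(winvK w); exact: catV. Qed.

Lemma catVr w r : w ++ winv w ++ r =G r.
Proof. by rewrite catA catV. Qed.
Lemma Vcatr w r : winv w ++ w ++ r =G r.
Proof. by rewrite catA Vcat. Qed.

Add Parametric Morphism : winv with signature ald_eq ==> ald_eq as winv_mor.
Proof.
move=> x y H.
transitivity (winv x ++ y ++ winv y); first by rewrite catV cats0.
transitivity (winv x ++ x ++ winv y); last exact: Vcatr.
apply: cat_mor; first reflexivity.
apply: cat_mor; [by symmetry | reflexivity].
Qed.

Lemma sh_rel p l r : ald_rel l r -> ald_rel (sh p l) (sh p r).
Proof.
case.
- case=> [[k a] b]; exact: (rel_cancel1 (Gen k (p ++ a), b)).
- move=> X Y a b H. apply: (rel_comm X Y).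
  by move: H; rewrite /incomparable !prefix_catr // eqxx.
- move=> X a d; have := rel_S0 X (p ++ a) d; by rewrite -!catA.
- move=> X a d; have := rel_S10 X (p ++ a) d; by rewrite -!catA.
- move=> X a d; have := rel_S11 X (p ++ a) d; by rewrite -!catA.
- move=> X a d; have := rel_A0 X (p ++ a) d; by rewrite -!catA.
- move=> X a d; have := rel_A10 X (p ++ a) d; by rewrite -!catA.
- move=> X a d; have := rel_A11 X (p ++ a) d; by rewrite -!catA.
- move=> a; have := rel_SSS (p ++ a); by rewrite -!catA.
- move=> a; have := rel_SSA (p ++ a); by rewrite -!catA.
- move=> a; have := rel_AS (p ++ a); by rewrite -!catA.
Qed.

Add Parametric Morphism p : (sh p) with signature ald_eq ==> ald_eq as sh_mor.
Proof.
move=> x y; elim=> [w|w1 w2 H|w1 w2 _ IH|w1 w2 w3 _ IH1 _ IH2].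
- reflexivity.
- case: H => u v l r H; rewrite !sh_cat.
  apply: eq_catl; apply: rel_eq; exact: sh_rel.
- by symmetry.
- by transitivity (sh p w2).
Qed.
#[local] Hint Resolve ald_refl : core.

Definition shl (p : addr) (l : letter) : letter := (Gen (gkind l.1) (p ++ gaddr l.1), l.2).

Lemma sh_cons p l w : sh p (l :: w) = [:: shl p l] ++ sh p w.
Proof. by []. Qed.

Lemma conj_inv x t r : x ++ t =G t ++ r -> winv x ++ t =G t ++ winv r.
Proof.
move=> H.
transitivity (winv x ++ (t ++ r) ++ winv r).
  by rewrite -catA catV cats0.
rewrite -H -catA Vcatr; reflexivity.
Qed.

Lemma comm_lt a b k1 k2 s1 s2 : incomparable a b ->
  [:: (Gen k1 a, s1)] ++ [:: (Gen k2 b, s2)] =G [:: (Gen k2 b, s2)] ++ [:: (Gen k1 a, s1)].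
Proof.
move=> H.
have E1 : X_ k1 a ++ X_ k2 b =G X_ k2 b ++ X_ k1 a by apply: rel_eq; apply: rel_comm.
have E2 := conj_inv E1.
have E3 : X_ k2 b ++ X_ k1 a =G X_ k1 a ++ X_ k2 b by symmetry.
have E4 := conj_inv E3.
have E5 : X_ k2 b ++ winv (X_ k1 a) =G winv (X_ k1 a) ++ X_ k2 b by symmetry.
have E6 := conj_inv E5.
case: s1; case: s2; [symmetry; exact E6 | exact E2 | symmetry; exact E4 | exact E1].
Qed.

Lemma incomp_heads x y a b d e : x != y -> incomparable ((x :: a) ++ d) ((y :: b) ++ e).
Proof. move=> H; by rewrite /incomparable !cat_cons !prefix_cons [y == x]eq_sym (negbTE H). Qed.

Lemma comm_sh x y a b u v : x != y ->
  sh (x :: a) u ++ sh (y :: b) v =G sh (y :: b) v ++ sh (x :: a) u.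
Proof.
move=> Hxy.
have C1 : forall l, [:: shl (x :: a) l] ++ sh (y :: b) v =G sh (y :: b) v ++ [:: shl (x :: a) l].
  move=> [[k1 d1] s1]; elim: v => [|[[k2 d2] s2] v IH]; first by rewrite cats0.
  rewrite sh_cons catA.
  have E := comm_lt k1 k2 s1 s2 (@incomp_heads x y a b d1 d2 Hxy).
  change ([:: shl (x::a) (Gen k1 d1, s1)] ++ [:: shl (y::b) (Gen k2 d2, s2)] =G
          [:: shl (y::b) (Gen k2 d2, s2)] ++ [:: shl (x::a) (Gen k1 d1, s1)]) in E.
  rewrite E -catA IH catA; reflexivity.
elim: u => [|l u IH]; first by rewrite cats0.
rewrite sh_cons -catA IH catA C1 -catA; reflexivity.
Qed.

Lemma conj1 p q t : (forall k d, X_ k (p ++ d) ++ t =G t ++ X_ k (q ++ d)) ->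
  forall u, sh p u ++ t =G t ++ sh q u.
Proof.
move=> H.
have L : forall l, [:: shl p l] ++ t =G t ++ [:: shl q l].
  case=> [[k d] [|]]; last exact: H.
  exact: (conj_inv (H k d)).
elim=> [|l u IH]; first by rewrite cats0.
rewrite sh_cons -catA IH catA L -catA; reflexivity.
Qed.

Lemma conj2 p x y a b t : x != y ->
  (forall k d, X_ k (p ++ d) ++ t =G t ++ X_ k ((x :: a) ++ d) ++ X_ k ((y :: b) ++ d)) ->
  forall u, sh p u ++ t =G t ++ sh (x :: a) u ++ sh (y :: b) u.
Proof.
move=> Hxy H.
have L : forall l, [:: shl p l] ++ t =G t ++ [:: shl (x :: a) l] ++ [:: shl (y :: b) l].
  case=> [[k d] [|]]; last exact: H.
  have := conj_inv (H k d); rewrite winv_cat => ->.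
  apply: cat_mor; first reflexivity.
  have Hyx : y != x by rewrite eq_sym.
  exact (@comm_sh y x b a [:: (Gen k d, true)] [:: (Gen k d, true)] Hyx).
elim=> [|l u IH]; first by rewrite !cats0.
rewrite sh_cons -catA IH catA L !sh_cons -!catA.
apply: cat_mor; first reflexivity.
apply: cat_mor; first reflexivity.
rewrite !catA; apply: cat_mor; last reflexivity.
symmetry; exact: (comm_sh a b u [:: l] Hxy).
Qed.

Lemma c1 u : sh [:: false] u ++ S_ [::] =G S_ [::] ++ sh [:: false; false] u ++ sh [:: true; false] u.
Proof. apply: (@conj2 [:: false] false true [:: false] [:: false]) => // k d; exact: (rel_eq (rel_S0 k [::] d)). Qed.
Lemma c2 u : sh [:: true; false] u ++ S_ [::] =G S_ [::] ++ sh [:: false; true] u.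
Proof. apply: conj1 => k d; exact: (rel_eq (rel_S10 k [::] d)). Qed.
Lemma c3 u : sh [:: true; true] u ++ S_ [::] =G S_ [::] ++ sh [:: true; true] u.
Proof. apply: conj1 => k d; exact: (rel_eq (rel_S11 k [::] d)). Qed.
Lemma c4 u : sh [:: false] u ++ A_ [::] =G A_ [::] ++ sh [:: false; false] u.
Proof. apply: conj1 => k d; exact: (rel_eq (rel_A0 k [::] d)). Qed.
Lemma c5 u : sh [:: true; false] u ++ A_ [::] =G A_ [::] ++ sh [:: false; true] u.
Proof. apply: conj1 => k d; exact: (rel_eq (rel_A10 k [::] d)). Qed.
Lemma c6 u : sh [:: true; true] u ++ A_ [::] =G A_ [::] ++ sh [:: true] u.
Proof. apply: conj1 => k d; exact: (rel_eq (rel_A11 k [::] d)). Qed.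

Lemma coset_intro g g' X z : g =G X -> g' =G X ++ sh [:: false] z -> same_coset g g'.
Proof.
move=> H1 H2; exists z; rewrite H1 H2 Vcatr; reflexivity.
Qed.

Lemma cat1b (x : bool) (s : seq bool) : [:: x] ++ s = x :: s. Proof. by []. Qed.
Lemma shS p a : sh p (S_ a) = S_ (p ++ a). Proof. by []. Qed.
Lemma shA p a : sh p (A_ a) = A_ (p ++ a). Proof. by []. Qed.
Lemma shSV p a : sh p (winv (S_ a)) = winv (S_ (p ++ a)). Proof. by []. Qed.
Lemma shAV p a : sh p (winv (A_ a)) = winv (A_ (p ++ a)). Proof. by []. Qed.

Ltac norm := rewrite /ald_star /ald_circ;
  repeat progress rewrite ?sh_cat ?winv_cat ?shS ?shA ?shSV ?shAV ?winv_sh ?winvK ?sh_sh ?cat1b ?cats0;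
  rewrite -?catA.


Lemma shVr p w r : sh p (winv w) ++ sh p w ++ r =G r.
Proof. rewrite -winv_sh; exact: Vcatr. Qed.
Lemma shrV p w r : sh p w ++ sh p (winv w) ++ r =G r.
Proof. rewrite -winv_sh; exact: catVr. Qed.
Lemma c1r u r : sh [:: false] u ++ S_ [::] ++ r =G S_ [::] ++ sh [:: false; false] u ++ sh [:: true; false] u ++ r.
Proof. by rewrite catA c1 -!catA. Qed.
Lemma c2r u r : sh [:: true; false] u ++ S_ [::] ++ r =G S_ [::] ++ sh [:: false; true] u ++ r.
Proof. by rewrite catA c2 -!catA. Qed.
Lemma c3r u r : sh [:: true; true] u ++ S_ [::] ++ r =G S_ [::] ++ sh [:: true; true] u ++ r.
Proof. by rewrite catA c3 -!catA. Qed.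
Lemma c4r u r : sh [:: false] u ++ A_ [::] ++ r =G A_ [::] ++ sh [:: false; false] u ++ r.
Proof. by rewrite catA c4 -!catA. Qed.
Lemma c5r u r : sh [:: true; false] u ++ A_ [::] ++ r =G A_ [::] ++ sh [:: false; true] u ++ r.
Proof. by rewrite catA c5 -!catA. Qed.
Lemma c6r u r : sh [:: true; true] u ++ A_ [::] ++ r =G A_ [::] ++ sh [:: true] u ++ r.
Proof. by rewrite catA c6 -!catA. Qed.
Lemma c3conj u r : sh [:: true; true] (winv u) ++ S_ [::] ++ sh [:: true; true] u ++ r =G S_ [::] ++ r.
Proof. by rewrite c3r shVr. Qed.
Lemma sss r : S_ [::] ++ S_ [:: true] ++ S_ [::] ++ r =G
  S_ [:: true] ++ S_ [::] ++ S_ [:: true] ++ S_ [:: false] ++ r.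
Proof. rewrite !catA; apply: cat_mor => //; rewrite -!catA; exact: (rel_eq (rel_SSS [::])). Qed.
Lemma ssa r : S_ [::] ++ S_ [:: true] ++ A_ [::] ++ r =G
  A_ [:: true] ++ S_ [::] ++ S_ [:: false] ++ r.
Proof. rewrite !catA; apply: cat_mor => //; rewrite -!catA; exact: (rel_eq (rel_SSA [::])). Qed.
Lemma as_ r : A_ [::] ++ S_ [::] ++ r =G
  S_ [:: true] ++ S_ [::] ++ A_ [:: true] ++ A_ [:: false] ++ r.
Proof. rewrite !catA; apply: cat_mor => //; rewrite -!catA; exact: (rel_eq (rel_AS [::])). Qed.
Lemma commr x y a b u v r : x != y ->
  sh (x :: a) u ++ sh (y :: b) v ++ r =G sh (y :: b) v ++ sh (x :: a) u ++ r.
Proof. move=> H; by rewrite !catA (comm_sh a b u v H). Qed.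
Lemma commS0 p w r : S_ [:: false] ++ sh (true :: p) w ++ r =G sh (true :: p) w ++ S_ [:: false] ++ r.
Proof. exact: (@commr false true [::] p (S_ [::]) w r). Qed.
Lemma commA0 p w r : A_ [:: false] ++ sh (true :: p) w ++ r =G sh (true :: p) w ++ A_ [:: false] ++ r.
Proof. exact: (@commr false true [::] p (A_ [::]) w r). Qed.
Lemma commS0V r : S_ [:: false] ++ winv (S_ [:: true]) ++ r =G winv (S_ [:: true]) ++ S_ [:: false] ++ r.
Proof. exact: (@commr false true [::] [::] (S_ [::]) (winv (S_ [::])) r). Qed.
Lemma commA0V r : A_ [:: false] ++ winv (A_ [:: true]) ++ r =G winv (A_ [:: true]) ++ A_ [:: false] ++ r.
Proof. exact: (@commr false true [::] [::] (A_ [::]) (winv (A_ [::])) r). Qed.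

Lemma padl x y : x ++ [::] =G y -> x =G y.
Proof. by rewrite cats0. Qed.
Ltac pad := apply: padl; rewrite -!catA.

Lemma law1 a b c : same_coset (ald_star a (ald_star b c)) (ald_star (ald_star a b) (ald_star a c)).
Proof.
apply: (@coset_intro _ _ (a ++ sh [:: true] b ++ sh [:: true; true] c ++ S_ [:: true] ++ S_ [::]
    ++ sh [:: true; true] (winv b) ++ sh [:: true] (winv a)) (S_ [::])).
- norm. by rewrite c3r.
- norm. pad.
  rewrite (shVr [:: true] a) c3conj -(c3r c) sss commS0V (catVr (S_ [:: true])).
  rewrite (commS0 [:: true] (winv b)) (commS0 [::] (winv a)) cats0; reflexivity.
Qed.

Lemma law2 a b c : same_coset (ald_star a (ald_circ b c)) (ald_circ (ald_star a b) (ald_star a c)).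
Proof.
apply: (@coset_intro _ _ (a ++ sh [:: true] b ++ sh [:: true; true] c ++ A_ [:: true] ++ S_ [::]
    ++ sh [:: true] (winv a)) (S_ [::])).
- norm. reflexivity.
- norm. pad.
  rewrite (shVr [:: true] a) (c6r (winv a)) -(c3r c) ssa.
  rewrite (commS0 [::] (winv a)) cats0; reflexivity.
Qed.

Lemma law3 a b c : same_coset (ald_star a (ald_star b c)) (ald_star (ald_circ a b) c).
Proof.
apply: (@coset_intro _ _ (a ++ sh [:: true] b ++ sh [:: true; true] c ++ S_ [:: true] ++ S_ [::]
    ++ sh [:: true; true] (winv b) ++ sh [:: true] (winv a)) (A_ [::])).
- norm. by rewrite c3r.
- norm. pad.
  rewrite -(c6r c) as_ commA0V (catVr (A_ [:: true])).
  rewrite (commA0 [:: true] (winv b)) (commA0 [::] (winv a)) cats0; reflexivity.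
Qed.

Lemma coset_elim g g' : same_coset g g' -> exists u, g' =G g ++ sh [:: false] u.
Proof. case=> u H; exists u; rewrite -H catVr; reflexivity. Qed.

Lemma wd g g' h h' : same_coset g g' -> same_coset h h' ->
     same_coset (ald_star g h) (ald_star g' h') /\
     same_coset (ald_circ g h) (ald_circ g' h').
Proof.
case/coset_elim=> u Hg; case/coset_elim=> v Hh.
split.
- apply: (@coset_intro _ _ (ald_star g h) (sh [:: false] u ++ sh [:: true] v)); first reflexivity.
  rewrite /ald_star Hg Hh. norm. pad.
  rewrite (@commr false true [::] [::] u h) // (c2r v) (c1r u).
  rewrite (@commr true false [:: false] [:: true] u v) // (shrV [:: true; false] u).
  rewrite (@commr false true [:: true] [::] v (winv g)) //.
  rewrite (@commr false true [:: false] [::] u (winv g)) // cats0; reflexivity.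
- apply: (@coset_intro _ _ (ald_circ g h) (sh [:: false] u ++ sh [:: true] v)); first reflexivity.
  rewrite /ald_circ Hg Hh. norm. pad.
  rewrite (@commr false true [::] [::] u h) // (c5r v) (c4r u) cats0; reflexivity.
Qed.

Theorem proposition4p4 :
  (* well-definedness of * and o on M = G_ALD / H (left cosets) *)
  (forall g g' h h' : word, same_coset g g' -> same_coset h h' ->
     same_coset (ald_star g h) (ald_star g' h') /\
     same_coset (ald_circ g h) (ald_circ g' h')) /\
  (* the ALD-algebra laws in M *)
  (forall a b c : word,
     same_coset (ald_star a (ald_star b c)) (ald_star (ald_star a b) (ald_star a c)) /\
     same_coset (ald_star a (ald_circ b c)) (ald_circ (ald_star a b) (ald_star a c)) /\
     same_coset (ald_star a (ald_star b c)) (ald_star (ald_circ a b) c)).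
Proof.
split; first exact: wd.
move=> a b c; split; [exact: law1 | split; [exact: law2 | exact: law3]].
Qed.
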